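(* Let $n\geq 5$ and let $P=(Y,X,Z)$ be a path of length two in $AQ_n$ (so $Y\ne Z$ are both adjacent to $X$). Then $|N_{AQ_n}(P)|\geq 6n-17$ and $|N_{AQ_n}(X)\cap N_{AQ_n}(Y)\cap N_{AQ_n}(Z)|\leq 1$. Furthermore, if $Z=\overline{X}_n$, then $|N_{AQ_n}(P)|\geq 6n-15$.
   Context: The $n$-dimensional augmented cube $AQ_n$ has vertex set $\{0,1\}^n$, vertices written as strings $X=x_nx_{n-1}\cdots x_1$. For $1\le i\le n$ let $X_i=x_n\cdots x_{i+1}\bar x_i x_{i-1}\cdots x_1$ (flip bit $i$) and $\overline{X}_i=x_n\cdots x_{i+1}\bar x_i\bar x_{i-1}\cdots\bar x_1$ (flip bits $i,\dots,1$), where $\bar x=1-x$. Two distinct vertices $X,Y$ are adjacent iff $Y=X_i$ for some $1\le i\le n$ or $Y=\overline{X}_i$ for some $2\le i\le n$. $N_{AQ_n}(V)$ is the neighbor set of a vertex $V$; for a subgraph $T$, $N_{AQ_n}(T)=\bigcup_{U\in V(T)}N_{AQ_n}(U)\setminus V(T)$. *)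

(* Defs.v *)
From mathcomp Require Import all_boot.
Set Implicit Arguments. Unset Strict Implicit. Unset Printing Implicit Defensive.

(* Vertices of AQ_n: binary strings x_n ... x_1, encoded as finite functions
   'I_n -> bool where index k : 'I_n holds bit x_(k+1). *)
Definition vert (n : nat) := {ffun 'I_n -> bool}.

Definition flip1 n (X : vert n) (i : nat) : vert n :=
  [ffun k : 'I_n => if k.+1 == i then ~~ X k else X k].

Definition flipL n (X : vert n) (i : nat) : vert n :=
  [ffun k : 'I_n => if k.+1 <= i then ~~ X k else X k].

Definition aq_adj n (X Y : vert n) : bool :=
  (X != Y) &&
  ([exists i : 'I_n.+1, (1 <= i) && (Y == flip1 X i)] ||
   [exists i : 'I_n.+1, (2 <= i) && (Y == flipL X i)]).

Definition nbr n (V : vert n) : {set vert n} := [set U | aq_adj V U].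

Definition nbrS n (T : {set vert n}) : {set vert n} :=
  (\bigcup_(U in T) nbr U) :\: T.

(* Main.v *)
Require Import Defs.
From mathcomp Require Import all_boot.
From mathcomp Require Import zify.
Set Implicit Arguments. Unset Strict Implicit. Unset Printing Implicit Defensive.

Definition sd n (A B : {set 'I_n}) : {set 'I_n} := [set x | (x \in A) != (x \in B)].
Definition iv n (l h : nat) : {set 'I_n} := [set x : 'I_n | l <= x <= h].
Arguments iv {n}.
Definition G n : {set {set 'I_n}} :=
  [set s : {set 'I_n} | (s != set0) && [forall x in s, forall y in s, (x:nat) <= y.+1]].

Lemma in_sd n (A B : {set 'I_n}) x : (x \in sd A B) = ((x \in A) != (x \in B)).
Proof. by rewrite inE. Qed.
Lemma in_iv n l h (x : 'I_n) : (x \in iv l h) = (l <= x <= h).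
Proof. by rewrite inE. Qed.

Lemma inG n (s : {set 'I_n}) :
  s \in G n <-> (exists x, x \in s) /\ (forall x y, x \in s -> y \in s -> (x:nat) <= y.+1).
Proof.
rewrite inE; split.
  case/andP=> /set0Pn [x Hx] /forallP H; split; first by exists x.
  by move=> y z Hy Hz; move: (H y) => /implyP /(_ Hy) /forallP /(_ z) /implyP; apply.
case=> [[x Hx] H]; apply/andP; split; first by apply/set0Pn; exists x.
by apply/forallP=> y; apply/implyP=> Hy; apply/forallP=> z; apply/implyP=> Hz; apply: H.
Qed.

Lemma GP n (X : {set 'I_n}) k1 k2 (h1 : k1 < n) (h2 : k2 < n) :
  X \in G n -> (Ordinal h1 \notin X) || (Ordinal h2 \notin X) || (k1 <= k2.+1).
Proof.
move=> /inG [_ H]; case E1: (Ordinal h1 \in X); case E2: (Ordinal h2 \in X) => //=.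
exact: (H _ _ E1 E2).
Qed.

Lemma GP0 n (X : {set 'I_n}) : X \in G n -> exists x, x \in X.
Proof. by case/inG. Qed.

Lemma set_eq_iv n (s : {set 'I_n}) l h : (forall x : 'I_n, (x \in s) = (l <= x <= h)) -> s = iv l h.
Proof. by move=> H; apply/setP=> x; rewrite in_iv H. Qed.

Lemma G_class n (s : {set 'I_n}) : s \in G n ->
  exists r (w : bool), r + w < n /\ s = iv r (r + w).
Proof.
move=> sG; have [x xs] := GP0 sG; have [_ D] := (inG s).1 sG.
case: (boolP [exists y in s, (y:nat) == x.+1]).
  case/existsP=> y /andP [ys /eqP yx]; exists x, true; split.
    by have := ltn_ord y; rewrite yx addn1.
  apply: set_eq_iv=> z; apply/idP/idP.
    move=> zs; have := D _ _ zs xs; have := D _ _ xs zs; have := D _ _ zs ys;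
    have := D _ _ ys zs; lia.
  move=> Hz; have [e|ne] := eqVneq (z:nat) x.
    by have ->: z = x by apply: val_inj.
  by have ->: z = y by apply: val_inj; rewrite /= yx; lia.
move=> /existsPn Hn.
case: (boolP [exists y in s, (y:nat).+1 == x]).
  case/existsP=> y /andP [ys /eqP yx]; exists y, true; split.
    by have := ltn_ord x; rewrite -yx addn1.
  apply: set_eq_iv=> z; apply/idP/idP.
    move=> zs; have := D _ _ zs xs; have := D _ _ xs zs; have := D _ _ zs ys;
    have := D _ _ ys zs.
    have := Hn z; rewrite zs /=; lia.
  move=> Hz; have [e|ne] := eqVneq (z:nat) y.
    by have ->: z = y by apply: val_inj.
  by have ->: z = x by apply: val_inj; rewrite /=; lia.
move=> /existsPn Hm; exists x, false; split; first by rewrite addn0.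
apply: set_eq_iv=> z; apply/idP/idP.
  move=> zs; have := D _ _ zs xs; have := D _ _ xs zs; have := Hn z; have := Hm z;
  rewrite zs /=; lia.
move=> Hz; have ->: z = x by apply: val_inj; rewrite /=; lia.
done.
Qed.

Ltac gp HX h1 h2 := let H := fresh "g" in
  have H := GP h1 h2 HX; rewrite ?in_sd ?in_iv /= in H.

Lemma rel_gen n r (w : bool) s (v : bool) : r + w < n -> s + v < n ->
  sd (iv r (r + w)) (iv s (s + v)) \in G n ->
  (~~ w && ~~ v && ((r == s.+1) || (s == r.+1))) ||
  (~~ w && v && ((r == s) || (r == s.+1))) ||
  (w && ~~ v && ((s == r) || (s == r.+1))).
Proof.
move=> hr hs HX.
have [z] := GP0 HX; rewrite in_sd !in_iv => Hz.
have h1 : r < n by lia. have h2 : r + w < n by lia.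
have h3 : s < n by lia. have h4 : s + v < n by lia.
move: hr hs Hz h2 h4 HX; case: w; case: v => /= hr hs Hz h2 h4 HX.
- gp HX h1 h3; gp HX h3 h1; gp HX h2 h3; gp HX h4 h1; clear HX; lia.
- gp HX h1 h3; gp HX h3 h1; gp HX h3 h2; gp HX h2 h3; clear HX; lia.
- gp HX h1 h3; gp HX h3 h1; gp HX h1 h4; gp HX h4 h1; clear HX; lia.
- gp HX h1 h3; gp HX h3 h1; clear HX; lia.
Qed.

Lemma sdC n (A B : {set 'I_n}) : sd A B = sd B A.
Proof. by apply/setP=> x; rewrite !in_sd eq_sym. Qed.

Lemma t_le1 n (a b : {set 'I_n}) : a \in G n -> b \in G n -> a != b ->
  #|[set W in G n | (sd W a \in G n) && (sd W b \in G n)]| <= 1.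
Proof.
move=> aG bG ab; apply/card_le1_eqP => W W'.
rewrite inE => /andP [WG /andP [Wa Wb]]; rewrite inE => /andP [W'G /andP [W'a W'b]].
have [ra [wa [ha ea]]] := G_class aG; have [rb [wb [hb eb]]] := G_class bG.
have [r1 [w1 [h1 e1]]] := G_class WG; have [r2 [w2 [h2 e2]]] := G_class W'G.
subst a b W W'.
have ne : ~~ ((ra == rb) && (wa == wb)).
  by apply: contra ab => /andP [/eqP -> /eqP ->].
have R1 := rel_gen h1 ha Wa; have R2 := rel_gen h1 hb Wb.
have R3 := rel_gen h2 ha W'a; have R4 := rel_gen h2 hb W'b.
suff [-> ->] : r1 = r2 /\ w1 = w2 by [].
clear -R1 R2 R3 R4 ne.
move: R1 R2 R3 R4 ne; case: w1; case: w2; case: wa; case: wb => /=; lia.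
Qed.

Definition Bs n (c : {set 'I_n}) := [set W | sd W c \in G n].
Definition N n (c : {set 'I_n}) := G n :&: Bs c.

Lemma inN n (c W : {set 'I_n}) : (W \in N c) = (W \in G n) && (sd W c \in G n).
Proof. by rewrite !inE. Qed.

Lemma card4 (T : finType) (a b c d : T) : #|[set a; b; c; d]| <= 4.
Proof.
set A := [set a; b; c; d].
have ->: A = a |: (b |: (c |: [set d])).
  by apply/setP=> x; rewrite !inE; do 3 case: (x == _).
by rewrite !cardsU1 cards1; do 3 case: (_ \notin _).
Qed.
Lemma card2 (T : finType) (a b : T) : #|[set a; b]| <= 2.
Proof. by rewrite cards2; case: (a != b). Qed.

Lemma N_pair n p : p.+1 < n -> #|N (iv p (p + true) : {set 'I_n})| <= 2.
Proof.
move=> hp; apply: leq_trans (card2 (iv p (p + false)) (iv p.+1 (p.+1 + false))).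
apply: subset_leq_card; apply/subsetP => W; rewrite inN => /andP [WG WN].
have [r [u [hr e]]] := G_class WG; subst W.
have hp' : p + true < n by rewrite addn1.
have R := rel_gen hr hp' WN.
have [[-> ->]|[-> ->]] : (r = p /\ u = false) \/ (r = p.+1 /\ u = false).
  by clear WN WG; move: hr R; case: u => /= hr R; lia.
all: by rewrite !inE eqxx ?orbT.
Qed.

Lemma N_single_opts n p r (u : bool) : p < n -> r + u < n ->
  sd (iv r (r + u)) (iv p (p + false)) \in G n ->
  (r = p.+1 /\ u = false /\ p.+2 < n.+1) \/ (r = p.-1 /\ u = false /\ 0 < p) \/
  (r = p /\ u = true /\ p.+1 < n) \/ (r = p.-1 /\ u = true /\ 0 < p).
Proof.
move=> hp hr WN; have hp' : p + false < n by rewrite addn0.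
have R := rel_gen hr hp' WN.
by clear WN; move: hr R; case: u => /= hr R; lia.
Qed.

Lemma N_single n p : p < n -> #|N (iv p (p + false) : {set 'I_n})| <= 4.
Proof.
move=> hp; apply: leq_trans (card4 (iv p.+1 (p.+1 + false)) (iv p.-1 (p.-1 + false))
   (iv p (p + true)) (iv p.-1 (p.-1 + true))).
apply: subset_leq_card; apply/subsetP => W; rewrite inN => /andP [WG WN].
have [r [u [hr e]]] := G_class WG; subst W.
have [[-> [-> _]]|[[-> [-> _]]|[[-> [-> _]]|[-> [-> _]]]]] := N_single_opts hp hr WN.
all: by rewrite !inE eqxx ?orbT.
Qed.

Lemma N_single0 n : 0 < n -> #|N (iv 0 (0 + false) : {set 'I_n})| <= 2.
Proof.
move=> hp; apply: leq_trans (card2 (iv 1 (1 + false)) (iv 0 (0 + true))).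
apply: subset_leq_card; apply/subsetP => W; rewrite inN => /andP [WG WN].
have [r [u [hr e]]] := G_class WG; subst W.
have [[-> [-> _]]|[[-> [-> //]]|[[-> [-> _]]|[-> [-> //]]]]] := N_single_opts hp hr WN.
all: by rewrite !inE eqxx ?orbT.
Qed.

Lemma N_singleL n p : p.+1 = n -> #|N (iv p (p + false) : {set 'I_n})| <= 2.
Proof.
move=> hp; have hp' : p < n by rewrite -hp.
apply: leq_trans (card2 (iv p.-1 (p.-1 + false)) (iv p.-1 (p.-1 + true))).
apply: subset_leq_card; apply/subsetP => W; rewrite inN => /andP [WG WN].
have [r [u [hr e]]] := G_class WG; subst W.
have [[-> [-> H]]|[[-> [-> _]]|[[-> [-> H]]|[-> [-> _]]]]] := N_single_opts hp' hr WN.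
- by exfalso; lia.
- by rewrite !inE eqxx ?orbT.
- by exfalso; lia.
- by rewrite !inE eqxx ?orbT.
Qed.

Lemma GPo n (X : {set 'I_n}) (x y : 'I_n) : X \in G n -> x \in X -> y \in X -> (x:nat) <= y.+1.
Proof. by move=> /inG [_ H]; apply: H. Qed.

Lemma sdK n (s c : {set 'I_n}) : sd (sd s c) c = s.
Proof. by apply/setP=> x; rewrite !in_sd; case: (x \in s); case: (x \in c). Qed.

Definition T n (c : {set 'I_n}) (m : 'I_n) := [set s in N c | m \in s].

Lemma T1 n (c : {set 'I_n}) (m : 'I_n) : m \in c -> #|N c| <= 2 * #|T c m|.
Proof.
move=> mc.
have sub : N c \subset T c m :|: [set sd x c | x in T c m].
  apply/subsetP => s sN; rewrite inE; case: (boolP (m \in s)) => ms.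
    by rewrite /T inE sN ms.
  apply/orP; right; apply/imsetP; exists (sd s c); last by rewrite sdK.
  move: sN; rewrite inN => /andP [sG sc].
  by rewrite /T inE inN sdK sc sG in_sd (negbTE ms) mc.
apply: leq_trans (subset_leq_card sub) _.
apply: leq_trans (leq_card_setU _ _).1 _.
by rewrite mul2n -addnn leq_add2l leq_imset_card.
Qed.

Lemma T2 n (s : {set 'I_n}) (m : 'I_n) : s \in G n -> m \in s ->
  s = iv m (m + false) \/ s = iv m (m + true) \/ (0 < m /\ s = iv m.-1 (m.-1 + true)).
Proof.
move=> sG ms; have [r [u [hr e]]] := G_class sG; subst s.
move: ms; rewrite in_iv => ms.
have [[-> ->]|[[-> ->]|[h [-> ->]]]] : (r = m /\ u = false) \/ (r = m /\ u = true) \/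
    (0 < m /\ r = m.-1 /\ u = true).
  by clear -ms; move: ms; case: u => /= ms; lia.
- by left.
- by right; left.
- by right; right.
Qed.

Lemma Nc_le4 n (c : {set 'I_n}) (m : 'I_n) : m \in c ->
  (forall x : 'I_n, x \in c -> (m:nat) <= x) -> #|N c| <= 4.
Proof.
move=> mc mmin; apply: leq_trans (T1 mc) _.
suff : #|T c m| <= 2 by lia.
case: (boolP ((0 < m) && (iv m.-1 (m.-1 + true) \in T c m))).
  case/andP => m0 Hin.
  apply: leq_trans (card2 (iv m (m + true)) (iv m.-1 (m.-1 + true))).
  apply: subset_leq_card; apply/subsetP => s sT.
  move: (sT); rewrite /T inE inN => /andP [/andP [sG sc] ms].
  have [e|[e|[_ e]]] := T2 sG ms; last 2 first.
  - by rewrite e !inE eqxx ?orbT.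
  - by rewrite e !inE eqxx ?orbT.
  exfalso.
  move: Hin; rewrite /T inE inN => /andP [/andP [_ HX] _].
  have hm1 : m.-1 < n by have := ltn_ord m; lia.
  have cm : forall x : 'I_n, x \in c -> (x:nat) = m.
    move=> x xc; have := mmin x xc; have := GPo HX (x:=x) (y:=Ordinal hm1).
    rewrite !in_sd !in_iv /= xc.
    have := mmin (Ordinal hm1); rewrite /=.
    case: (Ordinal hm1 \in c); lia.
  move: sc; rewrite e => sc; have [z] := GP0 sc.
  rewrite in_sd in_iv; case: (boolP (z \in c)) => zc; first by rewrite (cm z zc); lia.
  move=> Hz; have ez : z = m by apply: val_inj; rewrite /=; lia.
  by move: zc; rewrite ez mc.
move=> H.
apply: leq_trans (card2 (iv m (m + false)) (iv m (m + true))).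
apply: subset_leq_card; apply/subsetP => s sT.
move: (sT); rewrite /T inE inN => /andP [/andP [sG sc] ms].
have [e|[e|[m0 e]]] := T2 sG ms.
- by rewrite e !inE eqxx ?orbT.
- by rewrite e !inE eqxx ?orbT.
by move: H; rewrite m0 -e sT.
Qed.

Lemma N_two n p q : p < q -> q < n -> q != p.+2 ->
  #|N (sd (iv p (p + false)) (iv q (q + false)) : {set 'I_n})| <= 2.
Proof.
move=> pq qn nq; have pn : p < n by lia.
set c := sd _ _.
have mc : Ordinal pn \in c by rewrite /c in_sd !in_iv /=; lia.
apply: leq_trans (T1 mc) _.
suff : #|T c (Ordinal pn)| <= 1 by lia.
apply: (@leq_trans #|[set (iv p (p + false) : {set 'I_n})]|); last by rewrite cards1.
apply: subset_leq_card; apply/subsetP => s sT.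
move: (sT); rewrite /T inE inN => /andP [/andP [sG sc] ms].
have [e|[e|[m0 e]]] := T2 sG ms; first by rewrite e inE.
- exfalso; move: sc; rewrite e /c => sc /=.
  have [z] := GP0 sc; rewrite !in_sd !in_iv /= => Hz.
  have h1 : p.+1 < n by lia.
  have qh : q < n by [].
  gp sc qn h1; clear -Hz g pq nq; move: (nat_of_ord z) Hz => k Hz; lia.
- exfalso; move: sc; rewrite e /c => sc /=.
  have h1 : p.-1 < n by lia.
  gp sc qn h1; have m1 : 0 < p := m0; clear -g pq m1; lia.
Qed.

Lemma iv_G n r (w : bool) (h : r + w < n) : (iv r (r + w) : {set 'I_n}) \in G n.
Proof.
apply/inG; split.
  have hr : r < n by lia.
  by exists (Ordinal hr); rewrite in_iv /=; lia.
by move=> x y; rewrite !in_iv; case: w h => /= h; lia.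
Qed.

Lemma iv_pt n r s (w : bool) (h : r < n) : (iv r (r + w) : {set 'I_n}) = iv s (s + w) -> r = s.
Proof.
move=> e; have : Ordinal h \in (iv s (s + w) : {set 'I_n}) by rewrite -e in_iv /=; lia.
rewrite in_iv /= => H1.
have hs : s < n by lia.
have : Ordinal hs \in (iv r (r + w) : {set 'I_n}) by rewrite e in_iv /=; lia.
rewrite in_iv /= => H2; lia.
Qed.

Lemma cardG n : 0 < n -> 2 * n - 1 <= #|G n|.
Proof.
move=> n0.
pose f1 := fun k : 'I_n => (iv k (k + false) : {set 'I_n}).
pose f2 := fun k : 'I_n.-1 => (iv k (k + true) : {set 'I_n}).
have i1 : injective f1 by move=> x y /iv_pt e; apply: val_inj; apply: e.
have i2 : injective f2.
  move=> x y e; apply: val_inj; apply: (iv_pt (w := true)) e.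
  by have := ltn_ord x; lia.
have dis : [disjoint f1 @: setT & f2 @: setT].
  rewrite -setI_eq0; apply/eqP/setP => s; rewrite !inE.
  apply/andP => -[/imsetP [k _ ->] /imsetP [j _ e]].
  have hj : j < n by have := ltn_ord j; lia.
  have hj1 : j.+1 < n by have := ltn_ord j; lia.
  have : Ordinal hj \in f1 k by rewrite e in_iv /=; lia.
  have : Ordinal hj1 \in f1 k by rewrite e in_iv /=; lia.
  rewrite !in_iv /=; lia.
have sub : f1 @: setT :|: f2 @: setT \subset G n.
  apply/subsetP => s; rewrite inE => /orP [] /imsetP [k _ ->]; apply: iv_G.
    by rewrite addn0.
  by have := ltn_ord k; lia.
apply: leq_trans (subset_leq_card sub).
have := (leq_card_setU (f1 @: setT) (f2 @: setT)).2; rewrite dis => /eqP ->.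
rewrite !card_imset // !cardsT !card_ord.
lia.
Qed.

Lemma Nc_le4' n (c : {set 'I_n}) : c != set0 -> #|N c| <= 4.
Proof.
case/set0Pn => x xc.
case: (arg_minnP (fun y : 'I_n => (y:nat)) xc) => m mc mmin.
exact: (Nc_le4 mc mmin).
Qed.

Definition tset n (a b : {set 'I_n}) := [set W in G n | (sd W a \in G n) && (sd W b \in G n)].

Lemma t_witness n p : p.+2 < n ->
  0 < #|tset (iv p (p + false)) (iv p.+2 (p.+2 + false)) : {set {set 'I_n}}|.
Proof.
move=> h; apply/card_gt0P; exists (iv p.+1 (p.+1 + false)).
rewrite inE iv_G ?addn0 //=; last by lia.
have -> : sd (iv p.+1 p.+1) (iv p p) = iv p (p + true) :> {set 'I_n}.
  by apply/setP=> x; rewrite in_sd !in_iv; lia.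
have -> : sd (iv p.+1 p.+1) (iv p.+2 p.+2) = iv p.+1 (p.+1 + true) :> {set 'I_n}.
  by apply/setP=> x; rewrite in_sd !in_iv; lia.
by rewrite !iv_G //; lia.
Qed.

Lemma sd_ne0 n (a b : {set 'I_n}) : a != b -> sd a b != set0.
Proof.
apply: contra => /eqP e; apply/eqP/setP => x.
have : x \in sd a b = (x \in (set0 : {set 'I_n})) by rewrite e.
by rewrite in_sd inE; case: (x \in a); case: (x \in b).
Qed.

Lemma key1 n (a b : {set 'I_n}) : 5 <= n -> a \in G n -> b \in G n -> a != b ->
  #|N a| + #|N b| + #|N (sd a b)| <= 11 + #|tset a b|.
Proof.
move=> n5 aG bG ab.
have rc := Nc_le4' (sd_ne0 ab).
have [pa [wa [ha ea]]] := G_class aG; have [pb [wb [hb eb]]] := G_class bG.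
have pr : forall p (w : bool), p + w < n -> #|N (iv p (p + w) : {set 'I_n})| <= 4.
  move=> p [] h; last by apply: N_single; lia.
  by apply: leq_trans (N_pair _) _ => //; rewrite -addn1.
have ra := pr _ _ ha; have rb := pr _ _ hb; rewrite -ea in ra; rewrite -eb in rb.
case: wa ha ea => ha ea.
  have h' : pa.+1 < n by move: ha; rewrite addn1.
  have := @N_pair n pa h'; rewrite -ea; lia.
case: wb hb eb => hb eb.
  have h' : pb.+1 < n by move: hb; rewrite addn1.
  have := @N_pair n pb h'; rewrite -eb; lia.
have ne : pa != pb by apply: contra ab => /eqP e; rewrite ea eb e.
have e2 : forall p, p < n -> (p == 0) || (p.+1 == n) ->
    #|N (iv p (p + false) : {set 'I_n})| <= 2.
  move=> p hp /orP [/eqP -> | /eqP hn]; first by apply: N_single0; lia.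
  exact: N_singleL.
case: (boolP ((pa == 0) || (pa.+1 == n))) => Ea.
  have h' : pa < n by move: ha; rewrite addn0.
  by have := e2 _ h' Ea; rewrite -ea; lia.
case: (boolP ((pb == 0) || (pb.+1 == n))) => Eb.
  have h' : pb < n by move: hb; rewrite addn0.
  by have := e2 _ h' Eb; rewrite -eb; lia.
case: (boolP ((pa == pb.+2) || (pb == pa.+2))) => E.
  have tw : 0 < #|tset a b|.
    case/orP: E => /eqP E.
      have -> : tset a b = tset b a.
        by apply/setP => W; rewrite /tset inE [in RHS]inE [(sd W a \in G n) && _]andbC.
      by rewrite ea eb E; apply: t_witness; lia.
    by rewrite ea eb E; apply: t_witness; lia.
  lia.
have r2 : #|N (sd a b)| <= 2.
  case: (ltngtP pa pb) => h.
  - by rewrite ea eb; apply: N_two; lia.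
  - by rewrite sdC ea eb; apply: N_two; lia.
  - by move: ne; rewrite h eqxx.
lia.
Qed.

Lemma key2 n (a : {set 'I_n}) : 5 <= n -> a \in G n -> a != iv n.-1 (n.-1 + false) ->
  #|N a| + #|N (iv n.-1 (n.-1 + false) : {set 'I_n})| + #|N (sd a (iv n.-1 (n.-1 + false)))|
    <= 9 + #|tset a (iv n.-1 (n.-1 + false))|.
Proof.
move=> n5 aG ab.
have rc := Nc_le4' (sd_ne0 ab).
have rb : #|N (iv n.-1 (n.-1 + false) : {set 'I_n})| <= 2 by apply: N_singleL; lia.
have [pa [wa [ha ea]]] := G_class aG.
case: wa ha ea => ha ea.
  have h' : pa.+1 < n by move: ha; rewrite addn1.
  have := @N_pair n pa h'; rewrite -ea; lia.
have h' : pa < n by move: ha; rewrite addn0.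
have ne : pa != n.-1 by apply: contra ab => /eqP e; rewrite ea e.
case: (boolP (pa == 0)) => E0.
  have n0 : 0 < n by lia.
  have := @N_single0 n n0; rewrite -(eqP E0) -ea; lia.
have ra : #|N a| <= 4 by rewrite ea; apply: N_single.
case: (boolP (pa.+2 == n.-1)) => E.
  have tw : 0 < #|tset a (iv n.-1 (n.-1 + false))|.
    by rewrite ea -(eqP E); apply: t_witness; lia.
  lia.
have r2 : #|N (sd a (iv n.-1 (n.-1 + false)))| <= 2.
  by rewrite ea; apply: N_two; lia.
lia.
Qed.

Definition Uset n (a b : {set 'I_n}) :=
  (G n :|: Bs a :|: Bs b) :\: [set set0; a; b].

Lemma inBs n (a W : {set 'I_n}) : (W \in Bs a) = (sd W a \in G n).
Proof. by rewrite /Bs inE. Qed.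

Lemma cardBs n (a : {set 'I_n}) : #|Bs a| = #|G n|.
Proof.
have -> : Bs a = [set sd x a | x in G n].
  apply/setP => W; rewrite inBs; apply/idP/imsetP.
    by move=> H; exists (sd W a); rewrite ?sdK.
  by case=> x xG ->; rewrite sdK.
by apply: card_imset => x y e; rewrite -(sdK x a) e sdK.
Qed.

Lemma sd3 n (W a b : {set 'I_n}) : sd (sd W a) (sd a b) = sd W b.
Proof.
by apply/setP => x; rewrite !in_sd; case: (x \in W); case: (x \in a); case: (x \in b).
Qed.

Lemma sdA n (x y z : {set 'I_n}) : sd (sd x y) z = sd x (sd y z).
Proof.
by apply/setP => w; rewrite !in_sd; case: (w \in x); case: (w \in y); case: (w \in z).
Qed.

Lemma cardBC n (a b : {set 'I_n}) : #|Bs a :&: Bs b| = #|N (sd a b)|.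
Proof.
have -> : N (sd a b) = [set sd x a | x in Bs a :&: Bs b].
  apply/setP => W; rewrite inN; apply/idP/imsetP.
    case/andP => WG Wab; exists (sd W a); last by rewrite sdK.
    by rewrite inE !inBs sdK WG sdA.
  case=> x; rewrite inE !inBs => /andP [xa xb] ->.
  by rewrite xa sd3 xb.
by rewrite card_imset // => x y e; rewrite -(sdK x a) e sdK.
Qed.

Lemma IE n (a b : {set 'I_n}) :
  3 * #|G n| + #|tset a b| <= #|Uset a b| + 3 + #|N a| + #|N b| + #|N (sd a b)|.
Proof.
set A := G n; set B := Bs a; set C := Bs b.
have e1 := cardsUI (A :|: B) C.
have e2 := cardsUI A B.
have e3 := cardsUI (A :&: C) (B :&: C).
rewrite setIUl in e1.
have e4 : (A :&: C) :&: (B :&: C) = tset a b.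
  apply/setP => W; rewrite /tset [RHS]inE !in_setI !inBs.
  by case: (W \in A); case: (sd W a \in G n); case: (sd W b \in G n).
have e5 : #|B :&: C| = #|N (sd a b)| by apply: cardBC.
have e6 : #|B| = #|A| by apply: cardBs.
have e7 : #|C| = #|A| by apply: cardBs.
have e8 : A :&: B = N a by [].
have e9 : A :&: C = N b by [].
have e10 : #|Uset a b| + 3 >= #|A :|: B :|: C|.
  rewrite /Uset cardsD -/A -/B -/C.
  have -> : [set set0; a; b] = set0 |: (a |: [set b]).
    by apply/setP=> x; rewrite !inE orbA.
  have : #|(A :|: B :|: C) :&: (set0 |: (a |: [set b]))| <= 3.
    apply: leq_trans (subset_leq_card (subsetIr _ _)) _.
    by rewrite !cardsU1 cards1; do 2 case: (_ \notin _).
  lia.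
rewrite e4 e5 e9 in e3; rewrite e9 e7 in e1; rewrite e8 e6 in e2.
set X := #|N b :|: B :&: C| in e1 e3; set Y := #|A :|: B| in e1 e2; set Z := #|A :|: B :|: C| in e1 e10; lia.
Qed.

Lemma setmain n (a b : {set 'I_n}) : 5 <= n -> a \in G n -> b \in G n -> a != b ->
  6 * n - 17 <= #|Uset a b| /\
  (b = iv n.-1 (n.-1 + false) -> 6 * n - 15 <= #|Uset a b|).
Proof.
move=> n5 aG bG ab.
have ie := IE a b; have cg := @cardG n (ltn_trans _ n5 : 0 < n).
split; first by have := key1 n5 aG bG ab; lia.
move=> eb; have := key2 n5 aG (_ : a != iv n.-1 (n.-1 + false)); rewrite -eb.
by move=> /(_ ab); lia.
Qed.

Definition get n (v : vert n) (j : nat) : bool := [exists k : 'I_n, ((k:nat) == j) && v k].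
Definition dl n (v : vert n) : {set 'I_n} := [set k : 'I_n | v k != get v k.+1].
Definition xv n (v w : vert n) : vert n := [ffun k => v k != w k].

Lemma get_ord n (v : vert n) (k : 'I_n) : get v k = v k.
Proof.
apply/existsP/idP => [[j /andP [/eqP e vj]]|vk]; last by exists k; rewrite eqxx.
by have -> : k = j by apply: val_inj.
Qed.

Lemma get_out n (v : vert n) j : n <= j -> get v j = false.
Proof.
move=> h; apply/existsP => -[k /andP [/eqP e _]]; have := ltn_ord k; lia.
Qed.

Lemma get_Ord n (v : vert n) j (h : j < n) : get v j = v (Ordinal h).
Proof. by rewrite -get_ord. Qed.

Lemma get_xv n (v w : vert n) j : get (xv v w) j = (get v j != get w j).
Proof.
case: (ltnP j n) => h; last by rewrite !get_out.
by rewrite !(get_Ord _ h) ffunE.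
Qed.

Lemma dl_xv n (v w : vert n) : dl (xv v w) = sd (dl v) (dl w).
Proof.
apply/setP => k; rewrite in_sd !inE get_xv ffunE.
by case: (v k); case: (w k); case: (get v _); case: (get w _).
Qed.

Lemma dl0 n (d : vert n) : dl d = set0 -> forall k : 'I_n, d k = false.
Proof.
move=> e.
have H : forall j (k : 'I_n), n - k <= j -> d k = false.
  elim=> [|j IH] k hk; first by have := ltn_ord k; lia.
  have : k \notin dl d by rewrite e inE.
  rewrite inE negbK => /eqP ->.
  case: (ltnP k.+1 n) => h; last by rewrite get_out.
  rewrite (get_Ord _ h); apply: IH => /=; lia.
by move=> k; apply: (H (n - k)).
Qed.

Lemma xvK n (v w : vert n) : xv v (xv v w) = w.
Proof. by apply/ffunP => k; rewrite !ffunE; case: (v k); case: (w k). Qed.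

Lemma xv0 n (v w : vert n) : (forall k, xv v w k = false) -> v = w.
Proof.
move=> H; apply/ffunP => k; have := H k; rewrite ffunE.
by case: (v k); case: (w k).
Qed.

Lemma dl_inj n : injective (@dl n).
Proof.
move=> v w e; apply: xv0; apply: dl0.
by rewrite dl_xv e; apply/setP => x; rewrite in_sd in_set0 eqxx.
Qed.

Lemma dl_surj n (W : {set 'I_n}) : exists v : vert n, dl v = W.
Proof.
have c1 : #|{set 'I_n}| <= #|vert n|.
  apply: (@leq_card _ _ (fun W : {set 'I_n} => [ffun k => k \in W] : vert n)).
  move=> A B e; apply/setP => x.
  by have := congr1 (fun f : vert n => f x) e; rewrite !ffunE.
have : W \in [set dl v | v in vert n].
  have -> : [set dl v | v in vert n] = setT.
    apply/eqP; rewrite eqEcard subsetT cardsT card_imset //; exact: dl_inj.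
  by rewrite inE.
by case/imsetP => v _ ->; exists v.
Qed.

Definition em n j : vert n := [ffun k : 'I_n => (k:nat) == j].
Definition mL n h : vert n := [ffun k : 'I_n => (k:nat) < h].

Lemma flip1E n (X : vert n) i : 0 < i -> flip1 X i = xv X (em n i.-1).
Proof.
move=> h; apply/ffunP => k; rewrite !ffunE.
have -> : (k.+1 == i) = ((k:nat) == i.-1) by apply/eqP/eqP; lia.
by case: (_ == _); case: (X k).
Qed.

Lemma flipLE n (X : vert n) i : flipL X i = xv X (mL n i).
Proof.
apply/ffunP => k; rewrite !ffunE; rewrite -[k.+1 <= i]/((k:nat) < i).
by case: (_ < _); case: (X k).
Qed.

Lemma dl_em0 n : 0 < n -> dl (em n 0) = iv 0 (0 + false).
Proof.
move=> n0; apply/setP => k; rewrite !inE ffunE.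
case: (ltnP k.+1 n) => h; last by rewrite get_out //; lia.
by rewrite (get_Ord _ h) ffunE /=; lia.
Qed.

Lemma dl_emS n r : r.+1 < n -> dl (em n r.+1) = iv r (r + true).
Proof.
move=> hr; apply/setP => k; rewrite !inE ffunE.
case: (ltnP k.+1 n) => h; last by rewrite get_out //; lia.
by rewrite (get_Ord _ h) ffunE /=; lia.
Qed.

Lemma dl_mL n h : 0 < h -> h <= n -> dl (mL n h) = iv h.-1 (h.-1 + false).
Proof.
move=> h0 hn; apply/setP => k; rewrite !inE ffunE.
case: (ltnP k.+1 n) => h1; last by rewrite get_out //; lia.
by rewrite (get_Ord _ h1) ffunE /=; lia.
Qed.

Lemma xv_sym_eq n (U V m : vert n) : V = xv U m -> xv U V = m.
Proof. by move=> ->; rewrite xvK. Qed.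

Lemma adjE n (U V : vert n) : aq_adj U V = (sd (dl U) (dl V) \in G n).
Proof.
rewrite -dl_xv; apply/idP/idP.
  case/andP => UV /orP [] /existsP [i /andP [hi /eqP e]].
    have i0 : 0 < i by lia.
    rewrite flip1E // in e; rewrite (xv_sym_eq e).
    case E: (i:nat) => [|[|r]]; first by move: i0; rewrite E.
      by rewrite dl_em0 ?iv_G //; have := ltn_ord i; lia.
    rewrite /= dl_emS ?iv_G //; have := ltn_ord i; lia.
  rewrite flipLE in e; rewrite (xv_sym_eq e).
  rewrite dl_mL ?iv_G //; have := ltn_ord i; lia.
move=> HG; have [r [w [hr e]]] := G_class HG.
have UV : U != V.
  apply/eqP => E; subst V; have [x] := GP0 HG.
  by rewrite dl_xv in_sd eqxx.
rewrite /aq_adj UV /=.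
case: w hr e => hr e.
  have e' : dl (xv U V) = dl (em n r.+1) by rewrite e dl_emS //; lia.
  have eV : V = flip1 U r.+2 by rewrite flip1E // -(dl_inj e') xvK.
  apply/orP; left; apply/existsP.
  have hi : r.+2 < n.+1 by lia.
  by exists (Ordinal hi); rewrite /= eV eqxx.
case: r hr e => [|r] hr e.
  have e' : dl (xv U V) = dl (em n 0) by rewrite e dl_em0 //; lia.
  have eV : V = flip1 U 1 by rewrite flip1E // -(dl_inj e') xvK.
  apply/orP; left; apply/existsP.
  have hi : 1 < n.+1 by lia.
  by exists (Ordinal hi); rewrite /= eV eqxx.
have e' : dl (xv U V) = dl (mL n r.+2) by rewrite e dl_mL //; lia.
have eV : V = flipL U r.+2 by rewrite flipLE -(dl_inj e') xvK.
apply/orP; right; apply/existsP.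
have hi : r.+2 < n.+1 by lia.
by exists (Ordinal hi); rewrite /= eV eqxx.
Qed.

Lemma sdxx n (p q x : {set 'I_n}) : sd (sd p x) (sd q x) = sd p q.
Proof.
by apply/setP => w; rewrite !in_sd; case: (w \in p); case: (w \in q); case: (w \in x).
Qed.

Lemma sd0 n (p : {set 'I_n}) : sd set0 p = p.
Proof. by apply/setP => w; rewrite in_sd in_set0; case: (w \in p). Qed.

Lemma sdd n (p : {set 'I_n}) : sd p p = set0.
Proof. by apply/setP => w; rewrite in_sd in_set0 eqxx. Qed.

Lemma in_nbrS3 n (X Y Z v : vert n) :
  (v \in nbrS [set Y; X; Z]) =
  (v \notin [set Y; X; Z]) && (aq_adj Y v || aq_adj X v || aq_adj Z v).
Proof.
rewrite /nbrS in_setD; congr (_ && _).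
apply/bigcupP/idP => [[U UT]|H].
  rewrite /nbr inE; move: UT; rewrite !inE => /orP [/orP [] | ] /eqP ->
   => ->; rewrite ?orbT //.
case/orP: H => [/orP [] | ] H; [exists Y | exists X | exists Z];
  rewrite ?inE ?eqxx ?orbT //.
Qed.

Lemma in_nbr n (U v : vert n) : (v \in nbr U) = aq_adj U v.
Proof. by rewrite /nbr inE. Qed.

Lemma in_tset n (a b W : {set 'I_n}) :
  (W \in tset a b) = [&& W \in G n, sd W a \in G n & sd W b \in G n].
Proof. by rewrite /tset inE. Qed.

Theorem lemma2p8 (n : nat) (X Y Z : vert n) :
  5 <= n ->
  aq_adj X Y -> aq_adj X Z -> Y != Z ->
  [/\ 6 * n - 17 <= #|nbrS [set Y; X; Z]|,
      #|nbr X :&: nbr Y :&: nbr Z| <= 1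
    & Z = flipL X n -> 6 * n - 15 <= #|nbrS [set Y; X; Z]| ].
Proof.
move=> n5 XY XZ YZ.
pose f := fun v : vert n => sd (dl v) (dl X).
have finj : injective f.
  by move=> u v e; apply: dl_inj; rewrite -(sdK (dl u) (dl X)) -/(f u) e sdK.
have fadj : forall U V, aq_adj U V = (sd (f U) (f V) \in G n).
  by move=> U V; rewrite adjE /f sdxx.
have fX : f X = set0 by rewrite /f sdd.
have fsurj : forall W, exists v, f v = W.
  move=> W; have [v ev] := dl_surj (sd W (dl X)); exists v.
  by rewrite /f ev sdK.
set a := f Y; set b := f Z.
have aG : a \in G n by move: XY; rewrite fadj fX sd0.
have bG : b \in G n by move: XZ; rewrite fadj fX sd0.
have ab : a != b by rewrite /a /b (inj_eq finj).
have E1 : #|nbrS [set Y; X; Z]| = #|Uset a b|.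
  rewrite -(card_imset _ finj); apply: eq_card => W.
  have [v <-] := fsurj W.
  rewrite (mem_imset _ _ finj) in_nbrS3 /Uset in_setD !in_setU !inBs.
  rewrite !fadj fX sd0 (sdC (f Y)) (sdC (f Z)) -/a -/b.
  congr (_ && _).
    by rewrite !inE -fX -/a -/b !(inj_eq finj); case: (v == Y); case: (v == X).
  by case: (f v \in G n); case: (sd (f v) a \in G n); case: (sd (f v) b \in G n).
have [S1 S3] := setmain n5 aG bG ab.
split.
- by rewrite E1.
- have -> : #|nbr X :&: nbr Y :&: nbr Z| = #|tset a b|.
    rewrite -(card_imset _ finj); apply: eq_card => W.
    have [v <-] := fsurj W.
    rewrite (mem_imset _ _ finj) in_tset !in_setI !in_nbr !fadj fX sd0 (sdC (f Y)) (sdC (f Z)).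
    rewrite -/a -/b.
    by case: (f v \in G n); case: (sd (f v) a \in G n); case: (sd (f v) b \in G n).
  exact: t_le1.
- move=> eZ; rewrite E1; apply: S3.
  rewrite /b /f eZ flipLE -dl_xv.
  have -> : xv (xv X (mL n n)) X = mL n n.
    by apply/ffunP => k; rewrite !ffunE; case: (X k); case: (_ < _).
  by rewrite dl_mL //; lia.
Qed.
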